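(* Let $P=[p_{f,k}]$, $f\in[0,F)$, $k\in[0,K)$, be a $(K,F,S)$ MRA. Consider an MADC model with $K$ reducer nodes indexed by $[0,K)$ and $F$ batches of files $B_0,\dots,B_{F-1}$, with some number $\Lambda$ of mapper nodes and computation load $r$, in which the batches are assigned to the mapper nodes and the mapper nodes are connected to the reducer nodes in such a way that every reducer node $k\in[0,K)$ has access to all batches in the set $$R_k=\{B_f:\ p_{f,k}=*,\ f\in[0,F)\}.$$ Then the communication load $$L(r)=\frac{S}{KF}+\sum_{g=2}^{K}\frac{S_g}{KF(g-1)}$$ is achievable for this MADC model, where $S_g$ denotes the number of integers in $[0,S)$ that appear exactly $g$ times in $P$.
   Context: Notation: $[0,n)=\{0,1,\dots,n-1\}$, $[n]=\{1,\dots,n\}$. MADC (multi-access distributed computing) model: There are $\Lambda$ mapper nodes indexed by $[0,\Lambda)$ and $K$ reducer nodes indexed by $[0,K)$. There are $N$ input files $w_0,\dots,w_{N-1}\in\mathbb{F}_{2^d}$ and $Q$ output functions $\phi_q:\mathbb{F}_{2^d}^N\to\mathbb{F}_{2^b}$, $q\in[0,Q)$, of the form $\phi_q(w_0,\dots,w_{N-1})=h_q(v_{q,0},\dots,v_{q,N-1})$, where $v_{q,n}=g_{q,n}(w_n)\in\mathbb{F}_{2^t}$ is called an intermediate value (IV). Each reducer node $k$ is assigned a set $\mathcal W_k\subseteq[0,Q)$ of $Q/K$ output functions, these sets being pairwise disjoint. The files are partitioned into $F$ disjoint batches of $N/F$ files each. Map phase: each mapper node $\lambda$ stores a set $M_\lambda$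 of batches and computes all IVs $v_{q,n}$, $q\in[0,Q)$, for all files $w_n$ in its stored batches. Each reducer node is connected to a set of mapper nodes and has access to every batch stored at any mapper node it is connected to, together with all IVs computed from those batches. Shuffle phase: each reducer node $k$ broadcasts to all other reducer nodes, error-free, a message $\mathbf X_k$ of $l_k$ bits that is a function of the IVs it has access to. Reduce phase: each reducer node $k$ must recover all IVs $v_{q,n}$ with $q\in\mathcal W_k$, $n\in[0,N)$, from the received messages and the IVs it has access to. The computation load is $r=\sum_{\lambda=0}^{\Lambda-1}|M_\lambda|/F$ and the communication load is $L=\sum_{k=0}^{K-1}l_k/(QNt)$. A communication load $L$ is achievable for a given model (given batches, mapper storage and mapper–reducer connections) if there exists a shuffle/reduce scheme satisfying all decoding requirements that attains $L$ (for a suitable choice of the number of files per batch, the number of functions per reducer, and the IV length $t$). Map-Reduce Array (MRA): For positive integers $K,F,S$, an $F\times K$ array $P=[p_{f,k}]$, $f\in[0,F)$, $k\in[0,K)$, whose entries are either the symbol $*$ or integers from $[0,S)$, with every integer of $[0,S)$ occurring in $P$, is a $(K,F,S)$ MRA if: (C1) each integer occurs more than once in $P$; (C2) whenever two distinct entries satisfy $p_{f_1,k_1}=p_{f_2,k_2}=s$ with $s$ an integer, then $f_1\neq f_2$, $k_1\neq k_2$, and $p_{f_1,k_2}=p_{f_2,k_1}=*$. It is a $g$-regular MRA (for a constant $g\ge 2$) if it satisfies (C2) and every integer occurs exactly $g$ times. *)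

(* Defs.v *)
From HB Require Import structures.
From mathcomp Require Import all_boot all_order all_algebra.
Set Implicit Arguments. Unset Strict Implicit. Unset Printing Implicit Defensive.
Import Order.TTheory GRing.Theory Num.Theory.

(* An F x K array whose entries are either * (None) or integers (Some s). *)
Definition array (F K : nat) := 'I_F -> 'I_K -> option nat.

Definition occ F K (P : array F K) (s : nat) : nat :=
  #|[set fk : 'I_F * 'I_K | P fk.1 fk.2 == Some s]|.

Definition is_MRA (K F S : nat) (P : array F K) : Prop :=
  (forall f k s, P f k = Some s -> s < S) /\
  (forall s, s < S -> exists f k, P f k = Some s) /\
  (forall s, s < S -> 1 < occ P s) /\
  (forall f1 k1 f2 k2 s, (f1, k1) != (f2, k2) ->
     P f1 k1 = Some s -> P f2 k2 = Some s ->
     [/\ f1 != f2, k1 != k2, P f1 k2 = None & P f2 k1 = None]).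

Definition S_g F K S (P : array F K) (g : nat) : nat :=
  #|[set s : 'I_S | occ P s == g]|.

Definition L_MRA F K S (P : array F K) : rat :=
  (S%:R / (K * F)%:R + \sum_(2 <= g < K.+1) (S_g S P g)%:R / (K * F * (g - 1))%:R)%R.

(* Batches accessible to reducer k: union of the batches stored at the mapper
   nodes connected to k.  M : storage of mapper nodes, Conn : connections. *)
Definition access (F K Lam : nat) (M : 'I_Lam -> {set 'I_F})
  (Conn : 'I_K -> {set 'I_Lam}) (k : 'I_K) : {set 'I_F} :=
  \bigcup_(lam in Conn k) M lam.

(* Intermediate values v_{q,n} in F_{2^t}, represented as t-bit strings. *)
Definition IVs (Q N t : nat) := 'I_Q -> 'I_N -> t.-tuple bool.

(* With N = F*m files, file n belongs to batch n %/ m. *)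
Definition file_acc (F m : nat) (A : {set 'I_F}) (n : nat) : bool :=
  [exists f in A, n %/ m == val f].

(* Achievability of communication load L for the MADC model given by
   (K reducers, F batches, mappers 'I_Lam storing M, connections Conn):
   there exist m files per batch (N = F*m), eta functions per reducer
   (Q = K*eta, reducer k assigned W_k = {q | q %/ eta = k}), IV length t,
   message lengths l_k, encoders and decoders satisfying the access
   constraints and the decoding requirements, with load exactly L. *)
Definition achievable (K F Lam : nat) (M : 'I_Lam -> {set 'I_F})
  (Conn : 'I_K -> {set 'I_Lam}) (L : rat) : Prop :=
  exists (m eta t : nat) (l : 'I_K -> nat)
         (enc : 'I_K -> IVs (K * eta) (F * m) t -> seq bool)
         (dec : 'I_K -> ('I_K -> seq bool) -> IVs (K * eta) (F * m) t ->
                'I_(K * eta) -> 'I_(F * m) -> t.-tuple bool),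
    (0 < m /\ 0 < eta /\ 0 < t) /\
     (forall k v, size (enc k v) = l k) /\
     (forall k (v v' : IVs (K * eta) (F * m) t),
        (forall q (n : 'I_(F * m)), file_acc m (access M Conn k) n -> v q n = v' q n) ->
        enc k v = enc k v') /\
     (forall k (X X' : 'I_K -> seq bool) (v v' : IVs (K * eta) (F * m) t),
        (forall j, j != k -> X j = X' j) ->
        (forall q (n : 'I_(F * m)), file_acc m (access M Conn k) n -> v q n = v' q n) ->
        dec k X v = dec k X' v') /\
     (forall (k : 'I_K) (v : IVs (K * eta) (F * m) t) (q : 'I_(K * eta)) (n : 'I_(F * m)),
        q %/ eta = k -> dec k (fun j => enc j v) v q n = v q n) /\
     L = ((\sum_k l k)%:R / (K * eta * (F * m) * t)%:R)%R.

(* Main.v *)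
Require Import Defs.
From HB Require Import structures.
From mathcomp Require Import all_boot all_order all_algebra.
From Stdlib Require Import FunctionalExtensionality.
From mathcomp Require Import ring.
Import GRing.Theory Num.Theory.
Set Implicit Arguments. Unset Strict Implicit. Unset Printing Implicit Defensive.

Section Scheme.
Variables (K F S : nat) (P : array F K).
Hypothesis HP : is_MRA S P.
Variables (Lam : nat) (M : 'I_Lam -> {set 'I_F}) (Conn : 'I_K -> {set 'I_Lam}).
Hypothesis Hacc : forall (k : 'I_K) (f : 'I_F), P f k = None -> f \in access M Conn k.

Definition T := K`!.
Definition A (s : nat) : {set 'I_K} := [set j | [exists f, P f j == Some s]].
Definition gg s := #|A s|.
Definition dd s := T %/ (gg s).-1.
Definition others s (i : 'I_K) := enum (A s :\ i).
Definition bitpos s (i j : 'I_K) c := c * (gg s).-1 + index j (others s i).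
Definition castK (i : 'I_K) : 'I_(K * 1) := cast_ord (esym (muln1 K)) i.
Definition castF (f : 'I_F) : 'I_(F * 1) := cast_ord (esym (muln1 F)) f.
Definition uncastF (n : 'I_(F * 1)) : 'I_F := cast_ord (muln1 F) n.
Definition IV := IVs (K * 1) (F * 1) T.
Definition W (v : IV) s (i : 'I_K) r :=
  if [pick f | P f i == Some s] is Some f then nth false (v (castK i) (castF f)) r else false.
Definition Xbit (v : IV) (j : 'I_K) (sc : nat * nat) :=
  \big[addb/false]_(i in A sc.1 :\ j) W v sc.1 i (bitpos sc.1 i j sc.2).
Definition keys (j : 'I_K) : seq (nat * nat) :=
  flatten [seq (if j \in A s then [seq (s, c) | c <- iota 0 (dd s)] else [::]) | s <- iota 0 S].
Definition enc (j : 'I_K) (v : IV) : seq bool := [seq Xbit v j sc | sc <- keys j].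
Definition decbit (k : 'I_K) (X : 'I_K -> seq bool) (v : IV) (f : 'I_F) r :=
  match P f k with
  | Some s => let j := nth k (others s k) (r %% (gg s).-1) in
              let c := r %/ (gg s).-1 in
              nth false (X j) (index (s, c) (keys j)) (+)
              \big[addb/false]_(i in A s :\ k :\ j) W v s i (bitpos s i j c)
  | None => false
  end.
Definition dec (k : 'I_K) (X : 'I_K -> seq bool) (v : IV) (q : 'I_(K * 1)) (n : 'I_(F * 1))
  : T.-tuple bool :=
  if file_acc 1 (access M Conn k) n then v q n
  else [tuple decbit k X v (uncastF n) (val r) | r < T].

Lemma colU f f' k s : P f k = Some s -> P f' k = Some s -> f = f'.
Proof.
move=> H1 H2; case: (eqVneq f f') => // ne.
have ne2 : (f, k) != (f', k) by rewrite xpair_eqE negb_and ne.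
have [_ [_ [_ C2]]] := HP.
by case: (C2 _ _ _ _ _ ne2 H1 H2); rewrite eqxx.
Qed.

Lemma inA s j : (j \in A s) = [exists f, P f j == Some s].
Proof. by rewrite inE. Qed.

Lemma gg_occ s : gg s = occ P s.
Proof.
rewrite /gg /occ.
have -> : A s = [set fk.2 | fk in [set fk : 'I_F * 'I_K | P fk.1 fk.2 == Some s]].
  apply/setP => j; rewrite inA; apply/existsP/imsetP.
  - by case=> f Hf; exists (f, j) => //; rewrite inE.
  - by case=> [[f k]]; rewrite inE /= => Hf ->; exists f.
apply: card_in_imset => [[f1 k1]] [f2 k2]; rewrite !inE /= => /eqP H1 /eqP H2 /= Hk.
by subst k2; rewrite (colU H1 H2).
Qed.

Lemma gg_ge2 s : s < S -> 2 <= gg s.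
Proof. by move=> Hs; have [_ [_ [C1 _]]] := HP; rewrite gg_occ; apply: C1. Qed.

Lemma gg_le s : gg s <= K.
Proof. by rewrite /gg -[X in _ <= X]card_ord max_card. Qed.

Lemma T_div s : s < S -> dd s * (gg s).-1 = T.
Proof.
move=> Hs; rewrite /dd divnK //; apply: dvdn_fact.
have := gg_ge2 Hs; have := gg_le s; case: (gg s) => [|[|n]] //= ? _.
by rewrite ltnW.
Qed.

Lemma size_others s k : k \in A s -> size (others s k) = (gg s).-1.
Proof. by move=> Hk; rewrite /others -cardE /gg (cardsD1 k (A s)) Hk. Qed.

Lemma mem_keys j s c : ((s, c) \in keys j) = [&& s < S, j \in A s & c < dd s].
Proof.
apply/flatten_mapP/idP.
- case=> s'; rewrite mem_iota add0n => /andP [_ Hs'].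
  case: ifP => // Hj /mapP [c'] ; rewrite mem_iota add0n => Hc [-> ->].
  by rewrite Hs' Hj Hc.
- case/and3P=> Hs Hj Hc; exists s; first by rewrite mem_iota.
  by rewrite Hj; apply/mapP; exists c; rewrite // mem_iota.
Qed.

Lemma file_accE B (f : 'I_F) : file_acc 1 B (castF f) = (f \in B).
Proof.
apply/existsP/idP.
- by case=> f' /andP [Hf /eqP E]; move: E; rewrite divn1 /= => E; rewrite (val_inj E).
- by move=> Hf; exists f; rewrite Hf /= divn1.
Qed.

Lemma W_acc s (i k : 'I_K) (v v' : IV) r : k \in A s -> i \in A s -> i != k ->
  (forall q (n : 'I_(F * 1)), file_acc 1 (access M Conn k) n -> v q n = v' q n) ->
  W v s i r = W v' s i r.
Proof.
rewrite !inA => /existsP [fk /eqP Hk] _ ne Hv.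
rewrite /W; case: pickP => // f /eqP Hf.
have ne2 : (f, i) != (fk, k) by rewrite xpair_eqE negb_and ne orbT.
have [_ [_ [_ C2]]] := HP.
case: (C2 _ _ _ _ _ ne2 Hf Hk) => _ _ Hn _.
by rewrite Hv // file_accE; apply: Hacc.
Qed.


Lemma enc_indep k (v v' : IV) :
  (forall q (n : 'I_(F * 1)), file_acc 1 (access M Conn k) n -> v q n = v' q n) ->
  enc k v = enc k v'.
Proof.
move=> Hv; apply/eq_in_map => [[s c]]; rewrite mem_keys => /and3P [Hs Hk Hc].
rewrite /Xbit /=; apply: eq_bigr => i; rewrite in_setD1 => /andP [ne Hi].
exact: (W_acc _ Hk Hi ne Hv).
Qed.

Lemma A_of f k s : P f k = Some s -> k \in A s.
Proof. by move=> H; rewrite inA; apply/existsP; exists f; rewrite H. Qed.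

Lemma S_of f k s : P f k = Some s -> s < S.
Proof. by move=> H; have [H1 _] := HP; exact: H1 H. Qed.




Lemma others_mem f k s r : P f k = Some s ->
  let j := nth k (others s k) (r %% (gg s).-1) in
  [/\ j \in A s, j != k & index j (others s k) = r %% (gg s).-1].
Proof.
move=> H /=.
have Hk := A_of H; have Hs := S_of H.
have Hg := gg_ge2 Hs.
have Hlt : r %% (gg s).-1 < size (others s k).
  by rewrite size_others // ltn_mod; case: (gg s) Hg => [|[|]].
have : nth k (others s k) (r %% (gg s).-1) \in A s :\ k.
  by rewrite -mem_enum; apply: mem_nth.
rewrite in_setD1 => /andP [ne Hj]; split => //.
by rewrite index_uniq // enum_uniq.
Qed.

Lemma dec_indep k (X X' : 'I_K -> seq bool) (v v' : IV) :
  (forall j, j != k -> X j = X' j) ->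
  (forall q (n : 'I_(F * 1)), file_acc 1 (access M Conn k) n -> v q n = v' q n) ->
  dec k X v = dec k X' v'.
Proof.
move=> HX Hv; apply: functional_extensionality_dep => q.
apply: functional_extensionality_dep => n.
rewrite /dec; case: ifP => Ha; first exact: Hv.
apply: eq_from_tnth => r; rewrite !tnth_mktuple /decbit.
case E: (P _ k) => [s|] //.
have [Hj ne _] := others_mem (val r) E.
rewrite HX //; congr addb; apply: eq_bigr => i; rewrite !in_setD1 => /and3P [_ ne' Hi].
exact: (W_acc _ (A_of E) Hi ne' Hv).
Qed.

Lemma gpos s : s < S -> 0 < (gg s).-1.
Proof. by move=> Hs; have := gg_ge2 Hs; case: (gg s) => [|[|]]. Qed.

Lemma dec_ok k (v : IV) q n : val q = val k -> dec k (fun j => enc j v) v q n = v q n.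
Proof.
move=> Hq; rewrite /dec; case: ifP => Ha //.
set f := uncastF n.
have Hn : n = castF f by apply: val_inj.
have Hq' : q = castK k by apply: val_inj.
case E: (P f k) => [s|]; last by move: Ha; rewrite Hn file_accE Hacc.
apply: eq_from_tnth => r; rewrite tnth_mktuple /decbit E (tnth_nth false).
have [Hj ne Hidx] := others_mem (val r) E.
set j := nth k _ _ in Hj ne Hidx *.
set c := val r %/ _.
have Hs := S_of E. have Hk := A_of E.
have Hkey : (s, c) \in keys j.
  rewrite mem_keys Hs Hj /= /c ltn_divLR; last exact: gpos Hs.
  rewrite (T_div Hs); exact: ltn_ord.
rewrite (nth_map (s,c)); last by rewrite index_mem.
rewrite nth_index // /Xbit /=.
rewrite (bigD1 k) /=; last by rewrite in_setD1 eq_sym ne Hk.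
have Hb : \big[addb/false]_(i in A s :\ j | i != k) W v s i (bitpos s i j c) =
          \big[addb/false]_(i in A s :\ k :\ j) W v s i (bitpos s i j c).
  apply: eq_bigl => i; rewrite !in_setD1.
  by case: (i != k); case: (i != j); case: (i \in A s).
rewrite Hb addbK /W; case: pickP => [f' /eqP Hf'|/(_ f)]; last by rewrite E eqxx.
by rewrite (colU Hf' E) Hq' Hn /bitpos Hidx /c -divn_eq.
Qed.

Lemma pick_sum a b x (h : nat -> nat) : a <= x < b ->
  \sum_(a <= g < b) (x == g) * h g = h x.
Proof.
move=> Hx; rewrite (bigD1_seq x) ?mem_index_iota ?iota_uniq //= eqxx mul1n.
by rewrite big1 ?addn0 // => g; rewrite eq_sym => /negbTE ->.
Qed.

Lemma size_keys j : size (keys j) = \sum_(0 <= s < S) (j \in A s) * dd s.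
Proof.
rewrite /keys size_flatten /shape -map_comp sumnE big_map /index_iota subn0.
apply: eq_bigr => s _ /=; case: ifP => _; last by rewrite mul0n.
by rewrite size_map size_iota mul1n.
Qed.

Lemma sum_load : \sum_(k < K) size (keys k) = S * T + \sum_(0 <= s < S) dd s.
Proof.
rewrite (eq_bigr _ (fun k _ => size_keys k)).
rewrite exchange_big /=.
rewrite (eq_big_nat _ _ (F2 := fun s => T + dd s)); last first.
  move=> s /andP [_ Hs].
  have -> : \sum_(k < K) (k \in A s) * dd s = \sum_(k in A s) dd s.
    by rewrite [RHS]big_mkcond; apply: eq_bigr => k _; case: (k \in A s); rewrite ?mul1n ?mul0n.
  rewrite sum_nat_const -/(gg s) -(T_div Hs).
  have := gg_ge2 Hs; case: (gg s) => [|n] //= _.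
  by rewrite mulSn mulnC addnC.
by rewrite big_split /= sum_nat_const_nat subn0.
Qed.

Lemma sum_dd : \sum_(0 <= s < S) dd s = \sum_(2 <= g < K.+1) S_g S P g * (T %/ (g - 1)).
Proof.
rewrite big_mkord.
rewrite (eq_bigr (fun s : 'I_S => \sum_(2 <= g < K.+1) (occ P s == g) * (T %/ (g - 1)))); last first.
  move=> s _; rewrite (pick_sum (fun g => T %/ (g - 1))) /dd ?subn1 ?gg_occ //.
  by rewrite -gg_occ gg_ge2 //= ltnS gg_le.
rewrite exchange_big /=; apply: eq_bigr => g _.
rewrite /S_g -sum_nat_const [RHS]big_mkcond /=; apply: eq_bigr => s _.
by rewrite inE; case: (occ P s == g); rewrite ?mul1n ?mul0n.
Qed.


Lemma load_eq :
  (((\sum_(k < K) size (keys k))%:R / (K * 1 * (F * 1) * T)%:R)%R : rat) = L_MRA S P.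
Proof.
rewrite sum_load sum_dd /L_MRA !muln1.
have HT : (T%:R : rat) != 0%R by rewrite pnatr_eq0 -lt0n fact_gt0.
case: (posnP (K * F)) => HD.
  by rewrite HD !mul0n invr0 !mulr0 add0r big1 // => g _; rewrite mulr0.
have HD' : ((K * F)%:R : rat) != 0%R by rewrite pnatr_eq0 -lt0n.
move: (HD); rewrite muln_gt0 => /andP [HK0 HF0].
have HK : (K%:R : rat) != 0%R by rewrite pnatr_eq0 -lt0n.
have HF : (F%:R : rat) != 0%R by rewrite pnatr_eq0 -lt0n.
rewrite natrD natr_sum mulrDl; congr (_ + _)%R.
  by rewrite !natrM; field; rewrite HT HK HF.
rewrite big_distrl /=; apply: eq_big_nat => g /andP [Hg HgK].
have Hg1 : 0 < g - 1 by rewrite subn_gt0.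
have Hg1' : ((g - 1)%:R : rat) != 0%R by rewrite pnatr_eq0 -lt0n.
rewrite natrM natr_div; last 2 first.
- by apply: dvdn_fact; rewrite Hg1 /= leq_subLR add1n ltnW.
- by rewrite unitfE.
rewrite !natrM; field.
by rewrite HT HK HF Hg1'.
Qed.
End Scheme.

Theorem theorem1 (K F S : nat) (P : array F K) (HP : is_MRA S P)
  (Lam : nat) (M : 'I_Lam -> {set 'I_F}) (Conn : 'I_K -> {set 'I_Lam})
  (Hacc : forall (k : 'I_K) (f : 'I_F), P f k = None -> f \in access M Conn k) :
  achievable M Conn (L_MRA S P).
Proof.
exists 1, 1, (T K), (fun k => size (keys S P k)), (enc S P), (dec S P M Conn).
split; first by rewrite fact_gt0.
split; first by move=> k v; rewrite size_map.
split; first by move=> k v v' Hv; exact: (enc_indep HP Hacc Hv).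
split; first by move=> k X X' v v' HX Hv; exact: (dec_indep HP Hacc HX Hv).
split; first by move=> k v q n; rewrite divn1 => Hq; exact: (dec_ok HP Hacc).
by rewrite (load_eq HP).
Qed.
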